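(* Let $\mathcal D=\{d_1,\dots,d_s\}$ and $\mathcal H=\{h_1,\dots,h_n\}$ be finite sets, where each hypothesis $h_i$ is a probability distribution $\mathbb P[\cdot\mid h_i]$ on $\mathcal D$, the hypotheses $h_1,\dots,h_n$ are pairwise distinct as distributions, and the prior $\bm p=(p_1,\dots,p_n)$ on $\mathcal H$ satisfies $p_i>0$ for all $i$. Consider chained iterated learning with initial hypothesis $\bm h_{\mathrm{init}}=h_1$ and sample sizes $m_1,m_2,\dots$. Let ${\tt d}_1=\min_{j\neq 1} d_{RS}(\mathbb P[\cdot\mid h_1],\mathbb P[\cdot\mid h_j])$. Then for any $0<\varepsilon<1$, the sample size sequence $$m_t=\frac{4}{{\tt d}_1^2}\ln\frac{nt}{\varepsilon\,p_1}=\frac{4}{{\tt d}_1^2}\Bigl(\ln\frac{t}{\varepsilon}+C\Bigr),\qquad C=\ln\frac{n}{p_1},$$ makes iterated learning $\varepsilon$-self-sustaining; that is, for every $t\ge 1$, the posterior $\bm h^t$ of learner $t$ satisfies $\bm h^t_1\ge 1-\varepsilon$.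
   Context: Root-sine distance: for probability vectors $\bm a,\bm b$ on $\mathcal D$, $d_{RS}(\bm a,\bm b)=\sqrt{1-\bigl(\sum_{i=1}^s\sqrt{a_ib_i}\bigr)^2}$. Chained iterated learning: for $\mathbf d=(x_1,\dots,x_m)\in\mathcal D^m$ let $\mathbb P[\mathbf d\mid h]=\prod_{k=1}^m\mathbb P[x_k\mid h]$ and Bayesian posterior $\mathbb P[h_j\mid\mathbf d]=\mathbb P[\mathbf d\mid h_j]p_j/\sum_{k=1}^n\mathbb P[\mathbf d\mid h_k]p_k$. Learner $t\ge1$ picks a hypothesis $h_i$ from the posterior of learner $t-1$ (for $t=1$, from $\bm h_{\mathrm{init}}$), draws $m_t$ i.i.d. samples $\mathbf d\in\mathcal D^{m_t}$ from $h_i$, and forms the posterior $\mathbb P[\cdot\mid\mathbf d]$. The transition probabilities are $P^{|t}_{ij}=\sum_{\mathbf d\in\mathcal D^{m_t}}\mathbb P[h_j\mid\mathbf d]\,\mathbb P[\mathbf d\mid h_i]$, and the (marginal) posterior of learner $t$ is the row vector $\bm h^t=\bm h^{t-1}P^{|t}$ with $\bm h^0=(1,0,\dots,0)$ (the point mass at $h_1$). Iterated learning is $\varepsilon$-self-sustaining if for every learner $t$, a random hypothesis drawn from $\bm h^t$ equals $\bm h_{\mathrm{init}}$ with probability at least $1-\varepsilon$. *)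

(* Defs.v *)
From HB Require Import structures.
From mathcomp Require Import all_boot all_order all_algebra.
From mathcomp Require Import reals exp.
Set Implicit Arguments. Unset Strict Implicit. Unset Printing Implicit Defensive.
Import Order.TTheory GRing.Theory Num.Theory.
Local Open Scope ring_scope.

Section IL.
Variables (R : realType) (n s : nat).

Definition dRS (a b : 'I_s -> R) : R :=
  Num.sqrt (1 - (\sum_(i < s) Num.sqrt (a i * b i)) ^+ 2).

(* hypotheses: h i x = P[x | h_i];  prior p *)
Variables (h : 'I_n -> 'I_s -> R) (p : 'I_n -> R).

Definition lik (m : nat) (i : 'I_n) (d : {ffun 'I_m -> 'I_s}) : R :=
  \prod_(k < m) h i (d k).

Definition post (m : nat) (d : {ffun 'I_m -> 'I_s}) (j : 'I_n) : R :=
  lik j d * p j / \sum_(k < n) lik k d * p k.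

Definition trans (m : nat) (i j : 'I_n) : R :=
  \sum_(d : {ffun 'I_m -> 'I_s}) post d j * lik i d.

Fixpoint hvec (msz : nat -> nat) (i0 : 'I_n) (t : nat) : 'I_n -> R :=
  match t with
  | 0 => fun j => (j == i0)%:R
  | t'.+1 => fun j => \sum_(i < n) hvec msz i0 t' i * trans (msz t'.+1) i j
  end.

(* d_1 = min_{j <> i0} d_RS(h_{i0}, h_j); since d_RS <= 1 the neutral element 1
   is harmless (and the index set is nonempty when n >= 2). *)
Definition dmin (i0 : 'I_n) : R :=
  \big[Num.min/1]_(j < n | j != i0) dRS (h i0) (h j).

End IL.

Definition msize (R : realType) (n : nat) (d eps p1 : R) (t : nat) : nat :=
  `| Num.ceil (4 / d ^+ 2 * ln (n%:R * t%:R / (eps * p1))) |%N.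

(* Main.v *)
Require Import Defs.
From HB Require Import structures.
From mathcomp Require Import all_boot all_order all_algebra.
From mathcomp Require Import reals exp sequences.
From mathcomp Require Import ring lra.
Import Order.TTheory GRing.Theory Num.Theory.
Local Open Scope ring_scope.

Section Aux.
Variables (R : realType) (n s : nat) (h : 'I_n -> 'I_s -> R) (p : 'I_n -> R).
Hypothesis Hh0 : forall i x, 0 <= h i x.
Hypothesis Hh1 : forall i, \sum_(x < s) h i x = 1.
Hypothesis Hp : forall i, 0 < p i.
Hypothesis Hp1 : \sum_(i < n) p i = 1.

Definition BC (i j : 'I_n) : R := \sum_(x < s) Num.sqrt (h i x * h j x).

Lemma p_le1 i : p i <= 1.
Proof.
rewrite -Hp1 (bigD1 i) //= lerDl; apply: sumr_ge0 => k _; exact: ltW.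
Qed.

Lemma lik_ge0 m i (d : {ffun 'I_m -> 'I_s}) : 0 <= lik h i d.
Proof. by apply: prodr_ge0 => k _. Qed.

Lemma prod_sum m (F : 'I_s -> R) :
  \sum_(d : {ffun 'I_m -> 'I_s}) \prod_(k < m) F (d k) = (\sum_(x < s) F x) ^+ m.
Proof.
have := bigA_distr_bigA (fun (k : 'I_m) (x : 'I_s) => F x) => /= <-.
by rewrite prodr_const card_ord.
Qed.

Lemma sum_lik m i : \sum_(d : {ffun 'I_m -> 'I_s}) lik h i d = 1.
Proof. by rewrite /lik prod_sum Hh1 expr1n. Qed.

Lemma BC_id i j : \sum_(x < s) (Num.sqrt (h i x) - Num.sqrt (h j x)) ^+ 2 = 2 - 2 * BC i j.
Proof.
rewrite (_ : 2 - 2 * BC i j = \sum_(x < s) (h i x + h j x - 2 * Num.sqrt (h i x * h j x))); last first.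
  by rewrite sumrB big_split /= !Hh1 /BC mulr_sumr.
apply: eq_bigr => x _.
rewrite sqrrB !sqr_sqrtr // sqrtrM //; ring.
Qed.

Lemma BC_ge0 i j : 0 <= BC i j.
Proof. by apply: sumr_ge0 => x _; exact: sqrtr_ge0. Qed.

Lemma BC_le1 i j : BC i j <= 1.
Proof.
have : 0 <= 2 - 2 * BC i j by rewrite -BC_id; apply: sumr_ge0 => x _; exact: sqr_ge0.
lra.
Qed.

Lemma BC_lt1 i j : (exists x, h i x != h j x) -> BC i j < 1.
Proof.
move=> [x hx]; rewrite lt_neqAle BC_le1 andbT; apply/eqP => e.
have e0 : \sum_(x < s) (Num.sqrt (h i x) - Num.sqrt (h j x)) ^+ 2 = 0.
  by rewrite BC_id e; ring.
have /eqP := @psumr_eq0P _ _ xpredT _ (fun x _ => sqr_ge0 _) e0 x isT.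
rewrite sqrf_eq0 subr_eq0 => /eqP e1.
by move: hx; rewrite -(sqr_sqrtr (Hh0 i x)) -(sqr_sqrtr (Hh0 j x)) e1 eqxx.
Qed.

Lemma dRS_sq i j : dRS (h i) (h j) ^+ 2 = 1 - BC i j ^+ 2.
Proof.
rewrite /dRS -/(BC i j) sqr_sqrtr //.
have := BC_ge0 i j; have := BC_le1 i j; nra.
Qed.

Lemma dRS_gt0 i j : (exists x, h i x != h j x) -> 0 < dRS (h i) (h j).
Proof.
move=> /BC_lt1 lt1; rewrite /dRS -/(BC i j) sqrtr_gt0.
have := BC_ge0 i j; nra.
Qed.

Lemma dmin_gt0 i0 : (forall j, j != i0 -> exists x, h i0 x != h j x) -> 0 < dmin h i0.
Proof.
move=> Hd; rewrite /dmin; apply: (big_ind (fun x => 0 < x)) => //.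
  by move=> x y x0 y0; rewrite lt_min x0 y0.
by move=> j /Hd /dRS_gt0.
Qed.

Lemma dmin_le i0 j : j != i0 -> dmin h i0 <= dRS (h i0) (h j).
Proof. by move=> ji; rewrite /dmin (bigD1 j) //= ge_min lexx. Qed.

Lemma BC_le_exp i0 j : (forall j, j != i0 -> exists x, h i0 x != h j x) ->
  j != i0 -> BC i0 j <= expR (- (dmin h i0 ^+ 2) / 2).
Proof.
move=> Hd ji.
have d0 := @dmin_gt0 i0 Hd; have dl := @dmin_le i0 j ji.
have r0 : 0 <= dRS (h i0) (h j) by rewrite /dRS sqrtr_ge0.
have e2 : BC i0 j ^+ 2 <= expR (- (dmin h i0 ^+ 2) / 2) ^+ 2.
  rewrite -expRM_natl.
  have -> : 2%:R * (- dmin h i0 ^+ 2 / 2) = - dmin h i0 ^+ 2 :> R by field.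
  apply: le_trans (expR_ge1Dx _).
  have := dRS_sq i0 j; nra.
by rewrite -(ler_pXn2r (isT : (0 < 2)%N)) // nnegrE ?BC_ge0 // ltW // expR_gt0.
Qed.

Definition Zs m (d : {ffun 'I_m -> 'I_s}) := \sum_(k < n) lik h k d * p k.

Arguments Zs {m}.
Lemma Zs_ge0 m d : 0 <= @Zs m d.
Proof. by apply: sumr_ge0 => k _; rewrite mulr_ge0 ?lik_ge0 // ltW. Qed.

Lemma Zs_ge m d k : lik h k d * p k <= @Zs m d.
Proof.
rewrite /Zs (bigD1 k) //= lerDl; apply: sumr_ge0 => j _.
by rewrite mulr_ge0 ?lik_ge0 // ltW.
Qed.

Lemma post_ge0 m (d : {ffun 'I_m -> 'I_s}) j : 0 <= post h p d j.
Proof.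
rewrite /post; apply: divr_ge0; first by rewrite mulr_ge0 ?lik_ge0 // ltW.
exact: Zs_ge0.
Qed.

Lemma trans_ge0 m i j : 0 <= trans h p m i j.
Proof. by apply: sumr_ge0 => d _; rewrite mulr_ge0 ?post_ge0 ?lik_ge0. Qed.

Lemma one_minus m (d : {ffun 'I_m -> 'I_s}) i0 :
  lik h i0 d * (1 - post h p d i0) = \sum_(j < n | j != i0) lik h i0 d * post h p d j.
Proof.
have [Z0|Zn0] := eqVneq (Zs d) 0.
  have : lik h i0 d * p i0 <= 0 by rewrite -Z0 Zs_ge.
  rewrite pmulr_lle0 // => l0.
  have -> : lik h i0 d = 0 by apply/eqP; rewrite eq_le l0 lik_ge0.
  by rewrite mul0r big1 // => j _; rewrite mul0r.
rewrite -mulr_sumr; congr (_ * _).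
have : \sum_(j < n) post h p d j = 1.
  by rewrite /post -mulr_suml -/(Zs d) divff.
rewrite (bigD1 i0) //= => e; rewrite -e; ring.
Qed.

Definition gfun m (i0 j : 'I_n) (d : {ffun 'I_m -> 'I_s}) : R :=
  \prod_(k < m) Num.sqrt (h i0 (d k) * h j (d k)).

Arguments gfun {m}.
Lemma post_bound m (d : {ffun 'I_m -> 'I_s}) i0 j :
  lik h i0 d * post h p d j <= gfun i0 j d / p i0.
Proof.
set A := lik h i0 d; set B := lik h j d; set g := gfun i0 j d.
have g0 : 0 <= g by apply: prodr_ge0 => k _; exact: sqrtr_ge0.
have g2 : g ^+ 2 = A * B.
  rewrite /g /gfun -prodrXl /A /B /lik -big_split /=.
  by apply: eq_bigr => k _; rewrite sqr_sqrtr // mulr_ge0.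
have A0 : 0 <= A by exact: lik_ge0.
have B0 : 0 <= B by exact: lik_ge0.
have P0 := Hp i0; have Pj := Hp j; have P01 := p_le1 i0; have Pj1 := p_le1 j.
have ZA : A * p i0 <= Zs d by exact: Zs_ge.
have ZB : B * p j <= Zs d by exact: Zs_ge.
rewrite /post -/(Zs d) -/B.
have [Z0|Zp] := eqVneq (Zs d) 0.
  by rewrite Z0 invr0 !mulr0 divr_ge0 // ltW.
have Zpos : 0 < Zs d by rewrite lt_neqAle eq_sym Zp Zs_ge0.
have gZ : g * p i0 * p j <= Zs d.
  have h1 : (g * p i0 * p j) ^+ 2 <= Zs d ^+ 2.
    have -> : (g * p i0 * p j) ^+ 2 = (A * p i0) * (B * p j) * (p i0 * p j).
      by rewrite !exprMn g2; ring.
    have : (A * p i0) * (B * p j) <= Zs d ^+ 2.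
      by rewrite expr2; apply: ler_pM => //; rewrite mulr_ge0 // ltW.
    have : 0 <= (A * p i0) * (B * p j) by rewrite !mulr_ge0 // ltW.
    have : p i0 * p j <= 1 by rewrite mulr_ile1 // ltW.
    nra.
  by rewrite -(ler_pXn2r (isT : (0 < 2)%N)) // nnegrE ?mulr_ge0 // ?ltW // Zs_ge0.
rewrite ler_pdivlMr //.
have -> : A * (B * p j / Zs d) * p i0 = g * (g * p i0 * p j) / Zs d.
  rewrite (_ : g * (g * p i0 * p j) = A * B * p i0 * p j); first by field.
  by rewrite -g2; ring.
rewrite ler_pdivrMr //.
by rewrite (mulrC _ (Zs d)); rewrite [X in _ <= X]mulrC; apply: ler_wpM2l.
Qed.

Lemma trans_bound m i0 E : 0 <= E -> (forall j, j != i0 -> BC i0 j <= E) ->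
  1 - trans h p m i0 i0 <= n%:R * E ^+ m / p i0.
Proof.
move=> E0 HE.
have -> : 1 - trans h p m i0 i0 =
    \sum_(d : {ffun 'I_m -> 'I_s}) lik h i0 d * (1 - post h p d i0).
  rewrite -{1}(sum_lik m i0) /trans -sumrB; apply: eq_bigr => d _; ring.
under eq_bigr do rewrite one_minus.
apply: (@le_trans _ _ (\sum_(d : {ffun 'I_m -> 'I_s}) \sum_(j < n | j != i0) gfun i0 j d / p i0)).
  by apply: ler_sum => d _; apply: ler_sum => j _; exact: post_bound.
rewrite exchange_big /=.
apply: (@le_trans _ _ (\sum_(j < n | j != i0) E ^+ m / p i0)).
  apply: ler_sum => j ji; rewrite -mulr_suml /gfun (prod_sum m (fun x => Num.sqrt (h i0 x * h j x))) -/(BC i0 j).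
  apply: ler_wpM2r; first by rewrite invr_ge0 ltW.
  by apply: lerXn2r; rewrite ?nnegrE ?BC_ge0 ?HE.
apply: (@le_trans _ _ (\sum_(j < n) E ^+ m / p i0)).
  rewrite [X in _ <= X](bigD1 i0) //= lerDr divr_ge0 ?exprn_ge0 // ltW //.
by rewrite sumr_const card_ord -mulrA mulr_natl.
Qed.
End Aux.
Lemma arith (F : fieldType) (N T e p : F) : N != 0 -> T != 0 -> e != 0 -> p != 0 ->
  N * ((N * T / (e * p)) * (N * T / (e * p)))^-1 / p = e ^+ 2 * p / (N * T ^+ 2).
Proof. move=> hN hT he hp; field; by rewrite hN hT he hp. Qed.

Lemma msize_bound (R : realType) (n : nat) (d eps p1 : R) (t : nat) :
  (2 <= n)%N -> 0 < d -> 0 < eps -> eps < 1 -> 0 < p1 -> p1 <= 1 -> (1 <= t)%N ->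
  n%:R * expR (- d ^+ 2 / 2) ^+ (msize n d eps p1 t) / p1
    <= eps / (t%:R * (t%:R + 1)).
Proof.
move=> n2 d0 e0 e1 p0 p1le t1.
have N2 : 2 <= n%:R :> R by rewrite (ler_nat R 2 n).
have T1 : 1 <= t%:R :> R by rewrite (ler_nat R 1 t).
set X := n%:R * t%:R / (eps * p1).
have X1 : 1 < X.
  rewrite /X ltr_pdivlMr ?mulr_gt0 // mul1r.
  have : eps * p1 < 1 by nra.
  nra.
have lX : 0 < ln X by exact: ln_gt0.
set m := msize n d eps p1 t.
have mY : 4 / d ^+ 2 * ln X <= m%:R.
  have Y0 : 0 <= 4 / d ^+ 2 * ln X.
    by apply: mulr_ge0; [apply: divr_ge0; [lra| exact: sqr_ge0] | exact: ltW].
  rewrite /m /msize -/X natr_absz ger0_norm ?ceil_ge // ceil_ge0.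
  lra.
have d2 : 0 < d ^+ 2 by rewrite exprn_gt0.
have mY2 : 4 * ln X <= m%:R * d ^+ 2.
  by move: mY; rewrite mulrAC ler_pdivrMr.
have Em : expR (- d ^+ 2 / 2) ^+ m <= (X * X)^-1.
  rewrite -expRM_natl.
  have -> : (X * X)^-1 = expR (- (ln X + ln X)).
    by rewrite expRN expRD lnK // posrE; lra.
  rewrite ler_expR; lra.
apply: (@le_trans _ _ (n%:R * (X * X)^-1 / p1)).
  apply: ler_wpM2r; first by rewrite invr_ge0 ltW.
  by apply: ler_wpM2l => //; lra.
have -> : n%:R * (X * X)^-1 / p1 = eps ^+ 2 * p1 / (n%:R * t%:R ^+ 2).
  rewrite /X arith //; try exact: lt0r_neq0.
    by rewrite pnatr_eq0 -lt0n; apply: leq_trans n2.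
  by rewrite pnatr_eq0 -lt0n.
clear -N2 T1 e0 e1 p0 p1le.
have NT : 0 < n%:R * t%:R ^+ 2 :> R by apply: mulr_gt0; [lra | apply: exprn_gt0; lra].
rewrite ler_pdivrMr //.
have Tp : 0 < t%:R * (t%:R + 1) :> R by apply: mulr_gt0; lra.
rewrite [X in _ <= X]mulrAC ler_pdivlMr //.
have ep : eps * p1 <= 1 by rewrite mulr_ile1 // ltW.
set T := t%:R in T1 Tp *; set N := n%:R in N2 *.
apply: (@le_trans _ _ (eps * (T * (T + 1)))).
  have -> : eps ^+ 2 * p1 * (T * (T + 1)) = (eps * p1) * (eps * (T * (T + 1))) by ring.
  by apply: ler_piMl => //; apply: mulr_ge0 => //; lra.
apply: ler_wpM2l; first lra.
have h2 : 2 * T <= N * T by apply: ler_wpM2r; lra.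
have -> : N * T ^+ 2 = T * (N * T) by ring.
apply: ler_wpM2l; lra.
Qed.


Theorem theorem1 (R : realType) (n s : nat)
  (h : 'I_n -> 'I_s -> R) (p : 'I_n -> R) (i0 : 'I_n)
  (Hn : (2 <= n)%N) (Hi0 : nat_of_ord i0 = 0%N)
  (Hh_nonneg : forall i x, 0 <= h i x)
  (Hh_sum : forall i, \sum_(x < s) h i x = 1)
  (Hh_distinct : forall i j, i != j -> exists x, h i x != h j x)
  (Hp_pos : forall i, 0 < p i)
  (Hp_sum : \sum_(i < n) p i = 1)
  (eps : R) (Heps0 : 0 < eps) (Heps1 : eps < 1) :
  forall t : nat, (1 <= t)%N ->
    1 - eps <= hvec h p (msize n (dmin h i0) eps (p i0)) i0 t i0.
Proof.
set msz := msize n (dmin h i0) eps (p i0).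
have Hd : forall j, j != i0 -> exists x, h i0 x != h j x.
  by move=> j ji; apply: Hh_distinct; rewrite eq_sym.
have d0 : 0 < dmin h i0 by apply: dmin_gt0.
have step k : (1 <= k)%N -> 1 - trans h p (msz k) i0 i0 <= eps / (k%:R * (k%:R + 1)).
  move=> k1.
  apply: le_trans _ (@msize_bound R n (dmin h i0) eps (p i0) k Hn d0 Heps0 Heps1 (Hp_pos i0) (p_le1 _ _ _ Hp_pos Hp_sum i0) k1).
  apply: (trans_bound _ _ _ _ _ Hh_nonneg Hh_sum Hp_pos Hp_sum); first by apply: ltW; apply: expR_gt0.
  by move=> j ji; apply: (BC_le_exp _ _ _ _ Hh_nonneg Hh_sum _ _ Hd).
suff main : forall t, (forall i, 0 <= hvec h p msz i0 t i) /\
    1 - eps + eps / (t%:R + 1) <= hvec h p msz i0 t i0.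
  move=> t _; have [_ H] := main t; apply: le_trans _ H.
  rewrite lerDl; apply: divr_ge0; [exact: ltW | ].
  by apply: addr_ge0.
elim=> [|t [IH0 IH1]].
  split; first by move=> i /=; rewrite ler0n.
  by rewrite /= eqxx add0r divr1 subrK.
split.
  move=> i /=; apply: sumr_ge0 => k _; apply: mulr_ge0 => //; exact: trans_ge0.
have -> : hvec h p msz i0 t.+1 i0 = \sum_(i < n) hvec h p msz i0 t i * trans h p (msz t.+1) i i0 by [].
rewrite (bigD1 i0) //=.
set S := \sum_(i < n | i != i0) _.
have S0 : 0 <= S by apply: sumr_ge0 => k _; apply: mulr_ge0 => //; exact: trans_ge0.
have st := step t.+1 isT.
set A := hvec h p msz i0 t i0 in IH1 *.
set P := trans h p (msz t.+1) i0 i0 in st *.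
have A0 : 0 <= A := IH0 i0.
set T := (t%:R : R).
have T0 : 0 <= T by rewrite /T ler0n.
have eT : (t.+1)%:R = T + 1 :> R by rewrite /T -natr1.
rewrite eT in st *.
set a := 1 - eps + eps / (T + 1) in IH1 *.
set b := eps / ((T + 1) * (T + 1 + 1)) in st *.
have b0 : 0 <= b by apply: divr_ge0; [exact: ltW | apply: mulr_ge0; lra].
have b1 : b <= 1.
  rewrite /b ler_pdivrMr; last by apply: mulr_gt0; lra.
  have : 1 <= (T + 1) * (T + 1 + 1) by nra.
  lra.
have a1 : a <= 1.
  rewrite /a; have : eps / (T + 1) <= eps.
    by rewrite ler_pdivrMr; [nra | lra].
  lra.
have -> : 1 - eps + eps / (T + 1 + 1) = a - b.
  rewrite /a /b; field; apply/andP; split; apply: lt0r_neq0; lra.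
have h1 : 0 <= A * (P - (1 - b)) by apply: mulr_ge0 => //; lra.
have h2 : 0 <= (A - a) * (1 - b) by apply: mulr_ge0; lra.
have h3 : 0 <= (1 - a) * b by apply: mulr_ge0; lra.
suff : a - b <= A * P by move: S0; clear; lra.
clear -h1 h2 h3.
nra.
Qed.
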